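(* Let $G$ be a finite connected graph with node set $V$. Define the binary relation $\preceq$ on $V$ by $u\preceq x$ if and only if $e(u)=d(u,x)+e(x)$. Then $\preceq$ is a partial order on $V$. Moreover, the set $U^{\preceq}$ of all maximal elements of this partial order is the unique tight upper certificate of $G$ of minimum size.
   Context: $d$ is the shortest-path distance in the (undirected, unweighted) graph $G$ and $e(u)=\max_{v\in V}d(u,v)$. For $U\subseteq V$, $e^U(v)=\min_{x\in U}(d(v,x)+e(x))$ ($+\infty$ if $U=\emptyset$). A tight upper certificate is a set $U\subseteq V$ such that $e^U(v)=e(v)$ for all $v\in V$. *)

(* Defs.v *)
From mathcomp Require Import all_boot.
Set Implicit Arguments. Unset Strict Implicit. Unset Printing Implicit Defensive.

(* A finite simple graph: vertex type T (finType), adjacency e : rel T,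
   assumed symmetric and irreflexive in the theorem. *)
Section Graph.
Variables (T : finType) (e : rel T).

Definition walkb (u v : T) (n : nat) : bool :=
  [exists p : n.-tuple T, path e u p && (last u p == v)].

(* shortest-path distance: least n with a walk of length n from u to v.
   In a connected graph such n exists and is < #|T|, so searching
   0 .. #|T|-1 gives the exact minimum. *)
Definition dist (u v : T) : nat := find (walkb u v) (iota 0 #|T|).

Definition ecc (u : T) : nat := \max_(v : T) dist u v.

(* e^U(v) = min_{x in U} (d(v,x) + e(x)); None encodes +infinity (U empty) *)
Definition eU (U : {set T}) (v : T) : option nat :=
  if [pick x in U] is Some x0 then
    Some (\big[minn/dist v x0 + ecc x0]_(x in U) (dist v x + ecc x))
  else None.

Definition tight_upper_certificate (U : {set T}) : Prop :=
  forall v : T, eU U v = Some (ecc v).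

Definition prec (u x : T) : bool := ecc u == dist u x + ecc x.

Definition Umax : {set T} := [set u | [forall x, prec u x ==> (x == u)]].

End Graph.

(* Main.v *)
Require Import Defs.
From mathcomp Require Import all_boot.
From mathcomp Require Import zify.
Section S.
Variables (T : finType) (e : rel T).
Hypothesis e_conn : forall u v : T, connect e u v.

Lemma walk_exists u v : exists2 n, n < #|T| & walkb e u v n.
Proof.
have /connectP [p pth ->] := e_conn u v.
case/shortenP: pth => p' pth' uq _.
exists (size p').
  have := card_uniqP uq; rewrite /= => h.
  have := max_card (mem (u :: p')); rewrite h /=. done.
apply/existsP; exists (in_tuple p'); by rewrite /= pth' eqxx.
Qed.

Lemma dist_spec u v : dist e u v < #|T| /\ walkb e u v (dist e u v).
Proof.
have [n ln w] := walk_exists u v.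
have hh : has (walkb e u v) (iota 0 #|T|).
  by apply/hasP; exists n => //; rewrite mem_iota.
have := nth_find 0 hh; have := hh; rewrite has_find size_iota => lt.
by rewrite nth_iota.
Qed.

Lemma dist_min u v n : walkb e u v n -> dist e u v <= n.
Proof.
move=> w; case: (dist_spec u v) => lt _.
case: (ltnP n #|T|) => hn; last by apply: ltnW; apply: leq_trans hn.
rewrite leqNgt; apply/negP => h.
have := before_find 0 (h : n < find (walkb e u v) (iota 0 #|T|)).
by rewrite nth_iota // w.
Qed.

Lemma walk_cat u v w m n : walkb e u v m -> walkb e v w n -> walkb e u w (m + n).
Proof.
case/existsP=> p /andP[pp /eqP lp]; case/existsP=> q /andP[pq /eqP lq].
apply/existsP; exists (cat_tuple p q).
by rewrite /= cat_path pp lp pq last_cat lp lq eqxx.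
Qed.

Lemma walk0 u v : walkb e u v 0 -> u = v.
Proof.
case/existsP=> p; rewrite (tuple0 p) /= => /eqP.
by [].
Qed.

Lemma dist0 u : dist e u u = 0.
Proof.
apply/eqP; rewrite -leqn0; apply: dist_min; apply/existsP; exists [tuple] => /=; by rewrite eqxx.
Qed.

Lemma dist_tri u v w : dist e u w <= dist e u v + dist e v w.
Proof.
apply: dist_min; apply: walk_cat; [exact: (dist_spec u v).2 | exact: (dist_spec v w).2].
Qed.

Lemma dist_eq0 u v : dist e u v = 0 -> u = v.
Proof. move=> h; have := (dist_spec u v).2; rewrite h; exact: walk0. Qed.

Lemma ecc_tri u x : ecc e u <= dist e u x + ecc e x.
Proof.
apply/bigmax_leqP => v _; apply: leq_trans (dist_tri u x v) _.
by rewrite leq_add2l; apply: (leq_bigmax v).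
Qed.

Lemma prec_refl u : prec e u u.
Proof. by rewrite /prec dist0. Qed.

Lemma prec_anti u x : prec e u x -> prec e x u -> u = x.
Proof.
rewrite /prec => /eqP h1 /eqP h2; apply: dist_eq0.
move: h1 h2; lia.
Qed.

Lemma prec_trans u x y : prec e u x -> prec e x y -> prec e u y.
Proof.
rewrite /prec => /eqP h1 /eqP h2; apply/eqP.
have := ecc_tri u y; have := dist_tri u x y; move: h1 h2; lia.
Qed.

Lemma max_above v : exists2 x, prec e v x & x \in Umax e.
Proof.
case: (@arg_minnP _ v (prec e v) (ecc e) (prec_refl v)) => x px xmin.
exists x => //; rewrite inE; apply/forallP => y; apply/implyP => pxy.
have pvy := @prec_trans v x y px pxy.
have := xmin y pvy; move: pxy; rewrite /prec => /eqP h le.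
apply/eqP; apply: esym; apply: dist_eq0; move: h le; lia.
Qed.

Lemma bigmin_le (I : finType) (P : pred I) (F : I -> nat) i0 x :
  P x -> \big[minn/i0]_(y | P y) F y <= F x.
Proof.
move=> Px; move: (mem_index_enum x); elim: (index_enum I) => // a r IH.
rewrite inE big_cons; case/orP => [/eqP <-|xr]; first by rewrite Px geq_minl.
case: (P a); last exact: IH.
apply: leq_trans (geq_minr _ _) _; exact: IH.
Qed.

Lemma eU_char (U : {set T}) v : (exists2 x, x \in U & prec e v x) -> eU e U v = Some (ecc e v).
Proof.
case=> x xU pvx; rewrite /eU; case: pickP => [x0 x0U|no]; last by have := no x; rewrite xU.
congr Some; apply/eqP; rewrite eqn_leq; apply/andP; split.
  rewrite (eqP pvx); exact: (@bigmin_le T (fun y => y \in U) (fun y => dist e v y + ecc e y) _ x xU).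
apply: (big_ind (fun m => ecc e v <= m)); first exact: ecc_tri.
  by move=> a b ha hb; rewrite leq_min ha hb.
by move=> y _; exact: ecc_tri.
Qed.

Lemma Umax_sub (U : {set T}) : tight_upper_certificate e U -> Umax e \subset U.
Proof.
move=> tU; apply/subsetP => u uM; have := tU u; rewrite /eU.
case: pickP => [x0 x0U|//] [].
have : exists2 x, x \in U & \big[minn/dist e u x0 + ecc e x0]_(x in U) (dist e u x + ecc e x) = dist e u x + ecc e x.
  apply: (big_ind (fun m => exists2 x, x \in U & m = dist e u x + ecc e x)).
  - by exists x0.
  - move=> a b [xa ha ea] [xb hb eb]; case: (leqP a b) => h.
      by exists xa => //; rewrite -ea; apply/minn_idPl.
    by exists xb => //; rewrite -eb; apply/minn_idPr; apply: ltnW.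
  - by move=> y yU; exists y.
case=> x xU -> h.
have pux : prec e u x by rewrite /prec h.
move: uM; rewrite inE => /forallP /(_ x); rewrite pux /= => /eqP <-; done.
Qed.

End S.

Theorem proposition2 (T : finType) (e : rel T)
  (e_sym : symmetric e) (e_irr : irreflexive e)
  (e_conn : forall u v : T, connect e u v) :
  ((forall u : T, prec e u u) /\
   (forall u x : T, prec e u x -> prec e x u -> u = x) /\
   (forall u x y : T, prec e u x -> prec e x y -> prec e u y)) /\
  tight_upper_certificate e (Umax e) /\
  (forall U : {set T}, tight_upper_certificate e U ->
     #|Umax e| <= #|U| /\ (#|U| = #|Umax e| -> U = Umax e)).
Proof.
split; first split; [exact: prec_refl e_conn| split; [exact: prec_anti e_conn| exact: prec_trans e_conn]|].
split.
  move=> v; case: (@max_above T e e_conn v) => x h1 h2; apply: (@eU_char T e e_conn); by exists x.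
move=> U tU; have sub := @Umax_sub T e U tU; split; first exact: subset_leq_card.
move=> hc; apply/esym/eqP; rewrite eqEcard sub hc leqnn; done.
Qed.
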